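(* Let $N>0$ be an integer and $z$ a nonzero complex number (or indeterminate). Let $X,Y,Z$ be formal variables and let $\alpha,\beta$ satisfy $\alpha+\beta=X+Y$, $\alpha\beta=Z$. Then, as formal power series in $X,Y,Z$, \[ \Phi_0^{(N)}(X,Y,Z;z)=\frac{1}{Z-XY} \left\{{}_{2}F_{1}^{(N)}\left(\begin{matrix}\alpha-X,\beta-X\\ 1-X\end{matrix};z\right)-1\right\}, \] where the right-hand side is understood as follows: each term with $m\ge1$ of ${}_{2}F_{1}^{(N)}$ contains the factor $(\alpha-X)(\beta-X)=Z-XY$, so the division is exact, the result is symmetric in $\alpha,\beta$ and hence expressible in $X,Y,Z$, and $1/(1-X)_m$ is expanded as a power series in $X$.
   Context: $(x)_m=x(x+1)\cdots(x+m-1)$ is the rising factorial, $(x)_0=1$. For integers $N>0$, define \[ {}_{2}F_{1}^{(N)}\left(\begin{matrix}a,b\\ c\end{matrix};z\right)=\sum_{m=0}^{N-1}\frac{(a)_m(b)_m}{(c)_m\, m!}\,\frac{(N-m)_m}{(Nz^{-1}-m)_m}. \] For ${\boldsymbol{k}}=(k_1,\ldots,k_r)\in\mathbb{Z}_{>0}^r$ define the truncated multiple polylogarithm \[ \mathrm{Li}_{\boldsymbol{k}}^{(N)}(z)=\sum_{0<m_1<\cdots<m_r<N}\frac{1}{m_1^{k_1}\cdots m_r^{k_r}}\frac{(N-m_r)_{m_r}}{(Nz^{-1}-m_r)_{m_r}}. \] For integers $k,r,h>0$ let $I_0(k,r,h)$ be the set of $(k_1,\ldots,k_r)\in\mathbb{Z}_{>0}^r$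 with $k_r>1$, $k_1+\cdots+k_r=k$ and $\#\{i\mid k_i>1\}=h$ (a finite set). Put $G_0^{(N)}(k,r,h;z)=\sum_{{\boldsymbol{k}}\in I_0(k,r,h)}\mathrm{Li}^{(N)}_{\boldsymbol{k}}(z)$ and \[ \Phi_0^{(N)}(X,Y,Z;z)=\sum_{k,r,h>0}G^{(N)}_0(k,r,h;z)\,X^{k-r-h}Y^{r-h}Z^{h-1}. \] *)

(* Defs.v *)
From mathcomp Require Import all_boot all_order all_algebra.
Set Implicit Arguments. Unset Strict Implicit. Unset Printing Implicit Defensive.
Import Order.TTheory GRing.Theory Num.Theory.
Local Open Scope ring_scope.

Section Defs.
Variable R : fieldType.

Definition rfac (x : R) (m : nat) : R := \prod_(i < m) (x + i%:R).

Definition tfac (N m : nat) (z : R) : R :=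
  rfac (N%:R - m%:R) m / rfac (N%:R / z - m%:R) m.

(* truncated multiple polylogarithm Li^{(N)}_k(z), k = (k_1,...,k_r) given as a
   sequence; the summation runs over 0 < m_1 < ... < m_r < N, i.e. over
   r-tuples m of elements of 'I_N such that 0 :: m is strictly increasing. *)
Definition Li (N : nat) (k : seq nat) (z : R) : R :=
  \sum_(m : (size k).-tuple 'I_N | sorted ltn (0%N :: map val m))
    (\prod_(i < size k) ((nth 0%N (map val m) i)%:R ^+ nth 0%N k i)^-1)
    * tfac N (last 0%N (map val m)) z.

(* I_0(k,r,h): tuples (k_1,...,k_r) of positive integers with k_r > 1,
   k_1+...+k_r = k and #{i | k_i > 1} = h.  Every entry is <= k, so these are
   enumerated as r-tuples of elements of 'I_(k+1). *)
Definition in_I0 (k r h : nat) (t : r.-tuple 'I_k.+1) : bool :=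
  [&& all (fun x => 0 < x)%N (map val t),
      (1 < last 0 (map val t))%N,
      (sumn (map val t) == k) &
      (count (fun x => 1 < x)%N (map val t) == h)].

Definition G0 (N k r h : nat) (z : R) : R :=
  \sum_(t : r.-tuple 'I_k.+1 | @in_I0 k r h t) Li N (map val t) z.

(* Coefficient of X^a Y^b Z^c in Phi_0^{(N)}(X,Y,Z;z): the only (k,r,h) with
   k-r-h = a, r-h = b, h-1 = c is k = a+b+2c+2, r = b+c+1, h = c+1. *)
Definition Phi0_coef (N : nat) (z : R) (a b c : nat) : R :=
  G0 N (a + b + 2 * c + 2) (b + c + 1) (c + 1) z.

(* Polynomials in X, Y, Z: T = R[X][Y][Z]; coefficient of X^a Y^b Z^c of p
   is p`_c`_b`_a. *)
Definition T := {poly {poly {poly R}}}.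
Definition cT (x : R) : T := x%:P%:P%:P.
Definition vX : T := 'X%:P%:P.
Definition vY : T := 'X%:P.
Definition vZ : T := 'X.
Definition coefT (p : T) (a b c : nat) : R := p`_c`_b`_a.

(* Truncation at order n in X of the power-series expansion of 1/(j - X):
   sum_{a <= n} X^a / j^(a+1). *)
Definition geomT (n j : nat) : T :=
  \sum_(a < n.+1) cT ((j%:R)^-1 ^+ a.+1) * vX ^+ a.

(* ((alpha - X + j)(beta - X + j)) written through alpha+beta = X+Y and
   alpha*beta = Z:  alpha*beta + (alpha+beta)(j - X) + (j - X)^2. *)
Definition pairfac (j : nat) : T :=
  vZ + (vX + vY) * (cT j%:R - vX) + (cT j%:R - vX) ^+ 2.

(* Truncation at order n in X of
   (1/(Z-XY)) { 2F1^{(N)}(alpha-X, beta-X; 1-X; z) - 1 }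
   = sum_{1<=m<N} [(alpha-X)_m (beta-X)_m / (Z-XY)] / ((1-X)_m m!) * tfac N m z,
   where (alpha-X)_m (beta-X)_m = prod_{j<m} pairfac j, pairfac 0 = Z - XY
   (exact division = dropping the j = 0 factor), and
   1/(1-X)_m = prod_{i<m} 1/((i+1) - X), each factor expanded in X. *)
Definition RHS_trunc (N : nat) (z : R) (n : nat) : T :=
  \sum_(1 <= m < N)
     cT (tfac N m z / (m`!)%:R)
     * (\prod_(1 <= j < m) pairfac j)
     * (\prod_(i < m) geomT n i.+1).

End Defs.

(* Main.v *)
Require Import Defs.
From mathcomp Require Import all_boot all_order all_algebra.
From mathcomp Require Import zify ring.
Set Implicit Arguments. Unset Strict Implicit. Unset Printing Implicit Defensive.
Import Order.TTheory GRing.Theory Num.Theory.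
Local Open Scope ring_scope.

Section SumL.
Variable R : fieldType.

Fixpoint sumL (K r : nat) (F : seq nat -> R) : R :=
  match r with
  | 0 => F [::]
  | r'.+1 => \sum_(x < K) sumL K r' (fun s => F (val x :: s))
  end.

Lemma tuple_sumL K r (F : seq nat -> R) :
  \sum_(t : r.-tuple 'I_K) F (map val t) = sumL K r F.
Proof.
elim: r F => [|r IH] F /=.
  rewrite (eq_bigl (pred1 [tuple])) ?big_pred1_eq // => t.
  by apply/esym/eqP; apply: val_inj; case: t => -[].
rewrite (reindex (fun p : 'I_K * r.-tuple 'I_K => [tuple of p.1 :: p.2])) /=.
  rewrite -(pair_bigA _ (fun x (t : r.-tuple 'I_K) => F (val x :: map val t))) /=.
  apply: eq_bigr => x _; exact: IH.
exists (fun t : r.+1.-tuple 'I_K => (thead t, [tuple of behead t])).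
  by move=> [x t] _ /=; congr (_, _); apply: val_inj.
by move=> t _ /=; rewrite [in RHS](tuple_eta t).
Qed.

Lemma sumL_ext_size K r (F G : seq nat -> R) :
  (forall s, size s = r -> F s = G s) -> sumL K r F = sumL K r G.
Proof.
elim: r F G => [|r IH] F G H /=; first exact: H.
apply: eq_bigr => x _; apply: IH => s Hs; apply: H; by rewrite /= Hs.
Qed.

Lemma sumL_sum K r I (rr : seq I) (P : pred I) (F : I -> seq nat -> R) :
  sumL K r (fun s => \sum_(i <- rr | P i) F i s) = \sum_(i <- rr | P i) sumL K r (F i).
Proof.
elim: r F => [|r IH] F /=; first by [].
under eq_bigr do rewrite IH.
by rewrite exchange_big.
Qed.

Lemma sumL_scale K r c (F : seq nat -> R) :
  sumL K r (fun s => c * F s) = c * sumL K r F.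
Proof.
elim: r F => [|r IH] F /=; first by [].
by rewrite mulr_sumr; apply: eq_bigr => x _; rewrite IH.
Qed.

Lemma sumL_0 K r : sumL K r (fun _ => 0) = 0.
Proof. by elim: r => [|r IH] //=; rewrite big1. Qed.

End SumL.
Section Comb.
Variable R : fieldType.
Variable N : nat.
Variable t : nat -> R.

Definition cond (p : nat) (ks ms : seq nat) (k h : nat) : bool :=
  [&& sorted ltn (p :: ms), all (fun x => 0 < x)%N ks, (1 < last 0 ks)%N,
      sumn ks == k & count (fun x => 1 < x)%N ks == h].

Definition wt (ks ms : seq nat) : R :=
  (\prod_(i < size ks) ((nth 0%N ms i)%:R ^+ nth 0%N ks i)^-1) * t (last 0%N ms).

Definition V K p r k h : R :=
  sumL K r (fun ks => sumL N r (fun ms => if cond p ks ms k h then wt ks ms else 0)).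

Lemma addn_eq_sub (x s k : nat) : (x + s == k) = (x <= k)%N && (s == k - x)%N.
Proof.
by apply/idP/idP => [/eqP H|/andP [H1 /eqP H2]];
  [apply/andP; split; [|apply/eqP]|apply/eqP]; lia.
Qed.

Lemma cond_cons p x y ks ms k h : ks != [::] ->
  cond p (x :: ks) (y :: ms) k h =
  [&& (p < y)%N, (0 < x)%N, (x <= k)%N & ((1 < x) <= h)%N] &&
  cond y ks ms (k - x) (h - (1 < x)).
Proof.
move=> Hks; rewrite /cond /= addn_eq_sub addn_eq_sub.
have -> : last x ks = last 0%N ks by case: ks Hks.
by case: (p < y)%N; case: (0 < x)%N; case: (x <= k)%N; case: ((1 < x) <= h)%N;
  rewrite /= ?andbF.
Qed.

Lemma wt_cons x y ks ms : ms != [::] ->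
  wt (x :: ks) (y :: ms) = (y%:R ^+ x)^-1 * wt ks ms.
Proof.
move=> Hms; rewrite /wt /= big_ord_recl /= mulrA.
by have -> : last y ms = last 0%N ms by case: ms Hms.
Qed.

Lemma V_succ K p r k h : (0 < r)%N ->
  V K p r.+1 k h = \sum_(x < K) \sum_(y < N)
    (if [&& (p < y)%N, (0 < x)%N, (x <= k)%N & ((1 < x) <= h)%N]
     then (y%:R ^+ x)^-1 * V K y r (k - x) (h - (1 < x)) else 0).
Proof.
move=> Hr; rewrite /V /=; apply: eq_bigr => x _.
rewrite sumL_sum; apply: eq_bigr => y _.
case: ifP => Hc.
  rewrite -sumL_scale; apply: sumL_ext_size => ks Hks.
  rewrite -sumL_scale; apply: sumL_ext_size => ms Hms.
  have nks : ks != [::] by rewrite -size_eq0 Hks -lt0n.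
  have nms : ms != [::] by rewrite -size_eq0 Hms -lt0n.
  rewrite cond_cons // Hc /= wt_cons //; case: ifP => _; by rewrite ?mulr0.
rewrite -[RHS](sumL_0 R K r); apply: sumL_ext_size => ks Hks.
rewrite -[RHS](sumL_0 R N r); apply: sumL_ext_size => ms Hms.
have nks : ks != [::] by rewrite -size_eq0 Hks -lt0n.
by rewrite cond_cons // Hc.
Qed.

End Comb.
Section Comb2.
Variable R : fieldType.
Variable N : nat.
Variable t : nat -> R.

Lemma size_count_sumn (ks : seq nat) : all (fun x => 0 < x)%N ks ->
  (size ks + count (fun x => 1 < x)%N ks <= sumn ks)%N.
Proof.
elim: ks => [|x ks IH] //= /andP [Hx Hall].
have := IH Hall; case: x Hx => [|[|x]] //= _; lia.
Qed.

Lemma last_count (ks : seq nat) : (1 < last 0 ks)%N -> (0 < count (fun x => 1 < x)%N ks)%N.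
Proof.
case: ks => [|x ks] // H; rewrite -has_count; apply/hasP; exists (last x ks) => //.
exact: mem_last.
Qed.

Lemma cond_bound p ks ms k h : cond p ks ms k h ->
  [&& (size ks + h <= k)%N, (h <= size ks)%N & (0 < h)%N].
Proof.
case/and5P => _ Hpos Hlast /eqP <- /eqP <-.
by rewrite size_count_sumn // count_size last_count.
Qed.

Lemma V_vanish K p r k h : ~~ [&& (r + h <= k)%N, (h <= r)%N & (0 < h)%N] ->
  V N t K p r k h = 0.
Proof.
move=> Hn; rewrite /V -[RHS](sumL_0 R K r); apply: sumL_ext_size => ks Hks.
rewrite -[RHS](sumL_0 R N r); apply: sumL_ext_size => ms Hms.
case: ifP => // /cond_bound; rewrite Hks => H; by rewrite H in Hn.
Qed.

End Comb2.
Section TT.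
Variable R : fieldType.

Lemma coefT_add (p q : T R) a b c : coefT (p + q) a b c = coefT p a b c + coefT q a b c.
Proof. by rewrite /coefT !coefD. Qed.

Lemma coefT_sum I (r : seq I) (P : pred I) (F : I -> T R) a b c :
  coefT (\sum_(i <- r | P i) F i) a b c = \sum_(i <- r | P i) coefT (F i) a b c.
Proof. by rewrite /coefT !coef_sum. Qed.

Lemma coefT_cTM x (p : T R) a b c : coefT (cT x * p) a b c = x * coefT p a b c.
Proof. by rewrite /coefT /cT !coefCM. Qed.

Lemma coefT_vYM (p : T R) a b c :
  coefT (vY R * p) a b c = if b is b'.+1 then coefT p a b' c else 0.
Proof. by rewrite /coefT /vY coefCM coefXM; case: b => [|b] //=; rewrite coef0. Qed.

Lemma coefT_vZM (p : T R) a b c :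
  coefT (vZ R * p) a b c = if c is c'.+1 then coefT p a b c' else 0.
Proof. by rewrite /coefT /vZ coefXM; case: c => [|c] //=; rewrite !coef0. Qed.

Lemma coefT_vXnM e (p : T R) a b c :
  coefT (vX R ^+ e * p) a b c = if (e <= a)%N then coefT p (a - e) b c else 0.
Proof.
rewrite /coefT /vX -!rmorphXn /= !coefCM coefXnM.
by case: leqP => H; rewrite ?ltnNge ?H.
Qed.

Lemma coefT1 a b c : coefT (1 : T R) a b c = if [&& a == 0, b == 0 & c == 0]%N then 1 else 0.
Proof.
rewrite /coefT coef1; case: c => [|c] /=; last by rewrite !coef0 !andbF.
rewrite coef1; case: b => [|b] /=; last by rewrite coef0 andbF.
by rewrite coef1; case: a.
Qed.

Lemma coefT_geomM n y (q : T R) a b c :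
  coefT (geomT R n y * q) a b c =
  \sum_(e < n.+1) (y%:R^-1)^+e.+1 * (if (e <= a)%N then coefT q (a - e) b c else 0).
Proof.
rewrite /geomT mulr_suml coefT_sum; apply: eq_bigr => e _.
by rewrite -mulrA coefT_cTM coefT_vXnM.
Qed.

Lemma coefT_geomM_cut n y (q : T R) a b c : (a <= n)%N ->
  coefT (geomT R n y * q) a b c =
  \sum_(e < a.+1) (y%:R^-1)^+e.+1 * coefT q (a - e) b c.
Proof.
move=> Ha; rewrite coefT_geomM (big_ord_widen n.+1 (fun e => (y%:R^-1)^+e.+1 * coefT q (a - e) b c)) //.
rewrite [RHS]big_mkcond; apply: eq_bigr => e _ /=; rewrite ltnS.
by case: ifP; rewrite ?mulr0.
Qed.

End TT.
Section Wgen.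
Variable S : comPzRingType.
Variable N : nat.
Variables f g h : nat -> S.

Definition Wg (p : nat) : S :=
  \sum_(p.+1 <= m < N) f m * (\prod_(p.+1 <= j < m) (1 + g j)) * h m.

Lemma Wg_rec p : Wg p = \sum_(p.+1 <= y < N) (f y * h y + g y * Wg y).
Proof.
move Hd: (N - p)%N => d; elim: d p Hd => [|d IH] p Hd.
  by rewrite /Wg !big_geq //; lia.
case: (ltnP p.+1 N) => Hp; last by rewrite /Wg !big_geq.
rewrite {1}/Wg big_ltn // big_geq // mulr1.
rewrite [RHS]big_ltn // -(IH p.+1); last by lia.
rewrite (eq_big_nat _ _ (F2 := fun m => (1 + g p.+1) * (f m * (\prod_(p.+2 <= j < m) (1 + g j)) * h m))); last first.
  by move=> m Hm; rewrite big_ltn; [rewrite !mulrA (mulrC _ (1 + _)) | lia].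
rewrite -mulr_sumr -/(Wg p.+1).
by rewrite mulrDl mul1r -addrA (addrC (Wg _)).
Qed.
End Wgen.
Section WW.
Variable R : fieldType.
Variable N : nat.
Variable t : nat -> R.
Variable n : nat.

Definition Gf (y : nat) : T R := cT (y%:R^-1) * (vY R + vZ R * geomT R n y).
Definition Hf (y : nat) : T R := cT (y%:R^-1) * geomT R n y.
Definition W (p : nat) : T R := Wg N (fun m => cT (t m)) Gf Hf p.

Lemma coefT_Hf s y a b c : (a <= n)%N ->
  coefT (cT s * Hf y) a b c = s * (if (b == 0)%N && (c == 0)%N then (y%:R^-1)^+(a.+2) else 0).
Proof.
move=> Ha; rewrite /Hf -[geomT R n y]mulr1 coefT_cTM coefT_cTM coefT_geomM_cut //.
rewrite big_ord_recr /= big1 ?add0r => [|e _]; last first.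
  by rewrite coefT1 subn_eq0 leqNgt ltn_ord /= mulr0.
rewrite coefT1 subnn /=; case: ifP => _; rewrite ?mulr0 // mulr1 exprS.
by rewrite !exprS.
Qed.

Lemma coefT_Gf y (q : T R) a b c : (a <= n)%N ->
  coefT (Gf y * q) a b c = y%:R^-1 * ((if b is b'.+1 then coefT q a b' c else 0) +
    (if c is c'.+1 then \sum_(e < a.+1) (y%:R^-1)^+e.+1 * coefT q (a - e) b c' else 0)).
Proof.
move=> Ha; rewrite /Gf -mulrA coefT_cTM mulrDl coefT_add coefT_vYM -mulrA coefT_vZM.
by case: c => [|c] //; rewrite coefT_geomM_cut.
Qed.

Lemma coefT_W p a b c : (a <= n)%N ->
  coefT (W p) a b c = \sum_(p.+1 <= y < N)
    (t y * (if (b == 0)%N && (c == 0)%N then (y%:R^-1)^+(a.+2) else 0) +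
     y%:R^-1 * ((if b is b'.+1 then coefT (W y) a b' c else 0) +
    (if c is c'.+1 then \sum_(e < a.+1) (y%:R^-1)^+e.+1 * coefT (W y) (a - e) b c' else 0))).
Proof.
move=> Ha; rewrite /W Wg_rec coefT_sum; apply: eq_bigr => y _.
by rewrite coefT_add coefT_Hf // coefT_Gf.
Qed.

End WW.
Section Main.
Variable R : fieldType.
Variable N : nat.
Variable t : nat -> R.
Variable n : nat.

Lemma main_rec s : forall b c, (b + c)%N = s -> forall a p K,
  (a + b + c + c + 2 < K)%N -> (a <= n)%N ->
  V N t K p (b + c).+1 (a + b + c + c + 2) c.+1 = coefT (W N t n p) a b c.
Proof.
elim: s => [|s IH] b c Hbc a p K HK Ha.
  have [-> ->] : b = 0%N /\ c = 0%N by lia.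
  rewrite coefT_W // /V /= exchange_big big_geq_mkord [RHS]big_mkcond.
  apply: eq_bigr => y _.
  have HkK : (a + 2 < K)%N by lia.
  rewrite (bigD1 (Ordinal HkK)) //= big1 ?addr0 => [|x /eqP Hx]; last first.
    rewrite /cond /=; case: ifP => // /and5P [_ _ _ /eqP Hs _]; exfalso; apply: Hx.
    apply: val_inj => /=; lia.
  rewrite /cond /wt /= big_ord1 /= addn2 /= !addn0 eqxx !andbT mulr0 addr0.
  by rewrite -addn2 eqxx andbT; case: (p < y)%N => //; rewrite exprVn mulrC.
have Hr : (0 < b + c)%N by lia.
rewrite V_succ // coefT_W // exchange_big big_geq_mkord [RHS]big_mkcond.
apply: eq_bigr => y _ /=.
case Hpy: (p < y)%N; last by rewrite big1.
have -> : ((b == 0)%N && (c == 0)%N) = false.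
  by case: b Hbc {HK Hr} => [|b]; case: c => [|c] //= Hbc; exfalso; lia.
rewrite mulr0 add0r.
have [K' HK'] : exists K', K = K'.+2 by exists (K - 2)%N; lia.
subst K.
rewrite big_ord_recl big_ord_recl /= add0r.
rewrite /bump /= !add1n.
have H1 : (1 <= a + b + c + c + 2)%N by lia.
rewrite H1 /= mulrDr; congr (_ + _).
  rewrite expr1 subn0; case: b Hbc HK H1 {Hr} => [|b] Hbc HK H1.
    rewrite V_vanish ?mulr0 //; apply/negP => /and3P [_ H _]; lia.
  have E : (a + b.+1 + c + c + 2 - 1 = a + b + c + c + 2)%N by lia.
  rewrite addSn E IH //; lia.
case: c Hbc HK H1 Hr => [|c] Hbc HK H1 Hr.
  rewrite mulr0 big1 // => i _; case: ifP => // _.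
  rewrite V_vanish ?mulr0 //; apply/negP => /and3P [_ _ H]; lia.
have HaK : (a.+1 <= K')%N by lia.
rewrite mulr_sumr (big_ord_widen K' (fun e => y%:R^-1 * (y%:R^-1 ^+ e.+1 * coefT (W N t n y) (a - e) b c)) HaK) [RHS]big_mkcond; apply: eq_bigr => i _ /=; rewrite !add1n.
case: (ltnP i a.+1) => Hi.
  have H2 : (i.+2 <= a + b + c.+1 + c.+1 + 2)%N by lia.
  have E : (a + b + c.+1 + c.+1 + 2 - i.+2 = (a - i) + b + c + c + 2)%N by lia.
  rewrite H2 /= E subn1 /= addnS IH //; try lia.
  by rewrite -exprVn exprS mulrA.
case: ifP => // _; rewrite V_vanish ?mulr0 //; apply/negP => /and3P [H _ _]; lia.
Qed.
End Main.
Section Cong.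
Variable S : comNzRingType.
Variable x : S.
Variable n : nat.

Definition cong (p q : S) := exists s, p - q = x ^+ n.+1 * s.

Lemma cong_refl p : cong p p.
Proof. by exists 0; rewrite subrr mulr0. Qed.

Lemma cong_add p1 q1 p2 q2 : cong p1 q1 -> cong p2 q2 -> cong (p1 + p2) (q1 + q2).
Proof.
move=> [s1 H1] [s2 H2]; exists (s1 + s2).
have -> : p1 + p2 - (q1 + q2) = (p1 - q1) + (p2 - q2) by ring.
by rewrite H1 H2 mulrDr.
Qed.

Lemma cong_mul p1 q1 p2 q2 : cong p1 q1 -> cong p2 q2 -> cong (p1 * p2) (q1 * q2).
Proof.
move=> [s1 H1] [s2 H2]; exists (s1 * p2 + q1 * s2).
have -> : p1 * p2 - q1 * q2 = (p1 - q1) * p2 + q1 * (p2 - q2) by ring.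
rewrite H1 H2; ring.
Qed.

Lemma cong_eq p q r : cong p q -> q = r -> cong p r.
Proof. by move=> H <-. Qed.

Lemma cong_sum_nat lo hi (F G : nat -> S) :
  (forall m, (lo <= m < hi)%N -> cong (F m) (G m)) ->
  cong (\sum_(lo <= m < hi) F m) (\sum_(lo <= m < hi) G m).
Proof.
move=> H; rewrite big_nat_cond [X in cong _ X]big_nat_cond.
apply: (big_ind2 cong (cong_refl 0) cong_add) => m /andP [Hm _]; exact: H.
Qed.

Lemma cong_prod_nat lo hi (F G : nat -> S) :
  (forall m, (lo <= m < hi)%N -> cong (F m) (G m)) ->
  cong (\prod_(lo <= m < hi) F m) (\prod_(lo <= m < hi) G m).
Proof.
move=> H; rewrite big_nat_cond [X in cong _ X]big_nat_cond.
apply: (big_ind2 cong (cong_refl 1) cong_mul) => m /andP [Hm _]; exact: H.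
Qed.

Lemma geom_gen (u v : S) k : v * u = 1 ->
  (v - x) * \sum_(a < k.+1) u ^+ a.+1 * x ^+ a = 1 - u ^+ k.+1 * x ^+ k.+1.
Proof.
move=> H; elim: k => [|k IH].
  rewrite big_ord1 expr1 expr0 mulr1 mulrBl H; ring.
rewrite big_ord_recr /= mulrDr IH.
have E : (v - x) * (u ^+ k.+2 * x ^+ k.+1) =
  (v * u) * (u ^+ k.+1 * x ^+ k.+1) - u ^+ k.+2 * x ^+ k.+2.
  rewrite !exprS; move: (u ^+ k) (x ^+ k) => U X1; ring.
rewrite E H mul1r; move: (u ^+ k.+1 * x ^+ k.+1) (u ^+ k.+2 * x ^+ k.+2) => A B; ring.
Qed.

Lemma geom_cong (u v : S) : v * u = 1 ->
  cong ((v - x) * \sum_(a < n.+1) u ^+ a.+1 * x ^+ a) 1.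
Proof.
move=> H; rewrite geom_gen //; exists (- u ^+ n.+1).
move: (u ^+ n.+1) (x ^+ n.+1) => U X1; ring.
Qed.

Lemma pf_cong (X Y Z jj u g : S) : jj * u = 1 -> X = x -> cong ((jj - X) * g) 1 ->
  cong ((Z + (X + Y) * (jj - X) + (jj - X) ^+ 2) * g) (jj * (1 + u * (Y + Z * g))).
Proof.
move=> H HX Hg.
have -> : (Z + (X + Y) * (jj - X) + (jj - X) ^+ 2) * g =
  Z * g + (X + Y) * ((jj - X) * g) + (jj - X) * ((jj - X) * g) by ring.
apply: (@cong_eq _ (Z * g + (X + Y) * 1 + (jj - X) * 1)).
  apply: cong_add; [apply: cong_add; [apply: cong_refl | apply: cong_mul; [apply: cong_refl | exact: Hg]]
    | apply: cong_mul; [apply: cong_refl | exact: Hg]].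
have -> : jj * (1 + u * (Y + Z * g)) = jj + (jj * u) * (Y + Z * g) by ring.
rewrite H; ring.
Qed.

Lemma term_cong (pf geo G jj : nat -> S) (c1 c2 hinv : S) m :
  (forall j, (0 < j)%N -> cong (pf j * geo j) (jj j * (1 + G j))) ->
  c1 * \prod_(1 <= j < m.+1) jj j = c2 * hinv ->
  cong (c1 * \prod_(1 <= j < m.+1) pf j * \prod_(i < m.+1) geo i.+1)
       (c2 * \prod_(1 <= j < m.+1) (1 + G j) * (hinv * geo m.+1)).
Proof.
move=> Hj hc.
rewrite big_ord_recr /=.
have -> : \prod_(i < m) geo i.+1 = \prod_(1 <= j < m.+1) geo j.
  by rewrite big_add1 /= big_mkord.
have -> : c1 * \prod_(1 <= j < m.+1) pf j * (\prod_(1 <= j < m.+1) geo j * geo m.+1) =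
  c1 * \prod_(1 <= j < m.+1) (pf j * geo j) * geo m.+1 by rewrite big_split /=; ring.
apply: cong_eq.
  apply: cong_mul; last exact: cong_refl.
  apply: cong_mul; first exact: cong_refl.
  apply: cong_prod_nat => j /andP [Hj1 _]; exact: Hj.
rewrite big_split /=.
have -> : c1 * (\prod_(1 <= i < m.+1) jj i * \prod_(1 <= i < m.+1) (1 + G i)) * geo m.+1 =
  (c1 * \prod_(1 <= i < m.+1) jj i) * \prod_(1 <= i < m.+1) (1 + G i) * geo m.+1 by ring.
rewrite hc; ring.
Qed.

End Cong.

Section Final.
Variable R : fieldType.

Lemma cT_mul (x y : R) : cT (x * y) = cT x * cT y.
Proof. by rewrite /cT !rmorphM. Qed.
Lemma cT1 : cT (1 : R) = 1.
Proof. by rewrite /cT !rmorph1. Qed.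
Lemma cT_exp (x : R) k : cT (x ^+ k) = cT x ^+ k.
Proof. by rewrite /cT !rmorphXn. Qed.
Lemma cT_prod lo hi (F : nat -> R) : cT (\prod_(lo <= j < hi) F j) = \prod_(lo <= j < hi) cT (F j).
Proof. by rewrite /cT !rmorph_prod. Qed.

Lemma coefT_cong n (p q : T R) a b c : cong (vX R) n p q -> (a <= n)%N ->
  coefT p a b c = coefT q a b c.
Proof.
move=> [s Hs] Ha.
have -> : p = q + vX R ^+ n.+1 * s by rewrite -Hs addrC subrK.
by rewrite coefT_add coefT_vXnM ltnNge Ha addr0.
Qed.

Variable hR : [pchar R] =i pred0.

Lemma natr_neq0 k : (0 < k)%N -> (k%:R : R) != 0.
Proof. by move/pcharf0P: hR => H; rewrite H -lt0n. Qed.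

Lemma cong_eqL (S : comNzRingType) (x : S) n (p p' q : S) : p = p' -> cong x n p' q -> cong x n p q.
Proof. by move=> ->. Qed.

Lemma geomT_eq n j : geomT R n j = \sum_(a < n.+1) cT (j%:R^-1) ^+ a.+1 * vX R ^+ a.
Proof.
apply: eq_bigr => a _. rewrite cT_exp. done.
Qed.

Lemma cTinv j : (0 < j)%N -> cT (j%:R : R) * cT (j%:R^-1) = 1.
Proof.
move=> Hj; by rewrite -cT_mul mulfV; [exact: cT1 | exact: natr_neq0].
Qed.

Lemma geom_T n j : (0 < j)%N -> cong (vX R) n ((cT j%:R - vX R) * geomT R n j) 1.
Proof.
move=> Hj.
have G := @geom_cong _ (vX R) n (cT (j%:R^-1)) (cT j%:R) (cTinv Hj).
rewrite geomT_eq. exact: G.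
Qed.

Lemma pf_T n j : (0 < j)%N ->
  cong (vX R) n (pairfac R j * geomT R n j) (cT j%:R * (1 + Gf R n j)).
Proof.
move=> Hj; rewrite /pairfac /Gf.
exact: (@pf_cong _ (vX R) n (vX R) (vY R) (vZ R) (cT j%:R) (cT (j%:R^-1)) (geomT R n j) (cTinv Hj) erefl (geom_T n Hj)).
Qed.

Lemma scal_eq (tm : R) m :
  cT (tm / (m.+1`!)%:R) * \prod_(1 <= j < m.+1) cT (j%:R : R) = cT tm * cT (m.+1%:R^-1).
Proof.
rewrite -cT_prod -!cT_mul; congr cT.
rewrite -natr_prod -fact_prod factS natrM invfM !mulrA -[RHS]mulr1 -!mulrA; congr (_ * (_ * _)).
by rewrite mulVf // natr_neq0 // fact_gt0.
Qed.

Lemma main_cong N z n :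
  cong (vX R) n (RHS_trunc N z n) (W N (fun m => tfac N m z) n 0).
Proof.
rewrite /RHS_trunc /W /Wg.
apply: cong_sum_nat => m /andP [Hm1 Hm2].
case: m Hm1 Hm2 => [|m] // _ Hm2.
rewrite /Hf.
exact: (@term_cong _ (vX R) n (pairfac R) (geomT R n) (Gf R n) (fun j => cT j%:R)
  (cT (tfac N m.+1 z / (m.+1`!)%:R)) (cT (tfac N m.+1 z)) (cT (m.+1%:R^-1)) m
  (fun j Hj => pf_T n Hj) (scal_eq _ m)).
Qed.

Lemma Li_sumL N (ks : seq nat) (z : R) :
  Li N ks z = sumL N (size ks) (fun ms => if sorted ltn (0%N :: ms) then wt (fun m => tfac N m z) ks ms else 0 : R).
Proof. by rewrite /Li big_mkcond -tuple_sumL. Qed.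

Lemma G0_V N k r h (z : R) : G0 N k r h z = V N (fun m => tfac N m z) k.+1 0 r k h.
Proof.
transitivity (sumL k.+1 r (fun ks => if [&& all (fun x => 0 < x)%N ks, (1 < last 0 ks)%N,
      sumn ks == k & count (fun x => 1 < x)%N ks == h] then Li N ks z else 0)).
  by rewrite /G0 big_mkcond -tuple_sumL.
rewrite /V; apply: sumL_ext_size => ks Hks.
rewrite Li_sumL Hks; case: ifP => Hin.
  by apply: sumL_ext_size => ms _; rewrite /cond Hin andbT.
rewrite -[LHS](sumL_0 R N r); apply: sumL_ext_size => ms _.
by rewrite /cond Hin andbF.
Qed.

End Final.

Theorem theorem5p2 (R : fieldType) (hR : [pchar R] =i pred0)
    (N : nat) (z : R) :
  (0 < N)%N -> z != 0 ->
  forall n a b c : nat, (a <= n)%N ->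
    coefT (RHS_trunc N z n) a b c = Phi0_coef N z a b c.
Proof.
move=> _ _ n a b c Ha.
rewrite (@coefT_cong R n _ _ a b c (main_cong hR N z n) Ha).
rewrite /Phi0_coef G0_V.
have -> : (a + b + 2 * c + 2 = a + b + c + c + 2)%N by lia.
rewrite !addn1; symmetry; exact: main_rec.
Qed.
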